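(* Let $S$ be a finite set, $B\subseteq S$, and $\gamma,\gamma_B\in(0,1)$. Define $R_B(s) = 1-\gamma_B$ if $s\in B$ and $R_B(s)=0$ otherwise, and $\Gamma_B(s) = \gamma_B$ if $s\in B$ and $\Gamma_B(s)=\gamma$ otherwise. For an infinite sequence $\sigma=\sigma[0]\sigma[1]\dots$ of elements of $S$ and $t\in\mathbb{N}$ let $$G_t(\sigma) = \sum_{i=0}^{\infty} R_B(\sigma[t+i]) \prod_{j=0}^{i-1} \Gamma_B(\sigma[t+j]),$$ with the empty product equal to $1$. Then for every such $\sigma$ and every $t\in\mathbb{N}$, $$0 \le \gamma G_{t+1}(\sigma) \le G_t(\sigma) \le 1-\gamma_B + \gamma_B G_{t+1}(\sigma) \le 1.$$ *)

(* Defs.v *)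
From HB Require Import structures.
From mathcomp Require Import all_boot all_order all_algebra.
From mathcomp Require Import all_classical all_reals all_analysis.
Set Implicit Arguments. Unset Strict Implicit. Unset Printing Implicit Defensive.
Import Order.TTheory GRing.Theory Num.Theory numFieldNormedType.Exports.
Local Open Scope ring_scope.

Section defs.
Variables (R : realType) (S : finType) (B : {set S}) (g gB : R).

Definition RB (s : S) : R := if s \in B then 1 - gB else 0.
Definition GammaB (s : S) : R := if s \in B then gB else g.

Definition Gterm (sigma : nat -> S) (t i : nat) : R :=
  RB (sigma (t + i)%N) * \prod_(j < i) GammaB (sigma (t + j)%N).

Definition G (sigma : nat -> S) (t : nat) : R :=
  limn (series (Gterm sigma t)).
End defs.

(* Main.v *)
Require Import Defs.
From HB Require Import structures.
From mathcomp Require Import all_boot all_order all_algebra.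
From mathcomp Require Import all_classical all_reals all_analysis.
From mathcomp Require Import lra.
Import Order.TTheory GRing.Theory Num.Theory numFieldNormedType.Exports.
Local Open Scope ring_scope.

Lemma ar1 (R : realFieldType) (g gB x : R) : 0 < gB -> gB < 1 -> 0 <= x -> x <= 1 ->
  0 <= gB * (1 - x) -> 0 <= g * (1 - x) -> 1 - gB + gB * x <= 1.
Proof. intros; lra. Qed.
Lemma ar2 (R : realFieldType) (g gB x : R) : 0 < g -> g < 1 -> 0 <= x -> x <= 1 ->
  0 <= gB * (1 - x) -> 0 <= g * (1 - x) -> 0 + g * x <= 1.
Proof. intros; lra. Qed.
Lemma ar34 (R : realFieldType) (g gB x : R) : 0 < g -> g < 1 -> 0 < gB -> gB < 1 -> 0 <= x -> x <= 1 ->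
  0 <= g * x /\ g * x <= 1 - gB + gB * x /\ 0 + g * x <= 1 - gB + gB * x /\ 1 - gB + gB * x <= 1.
Proof.
intros.
have e1 : 0 <= gB * (1 - x) by rewrite mulr_ge0 ?subr_ge0 // ltW.
have e2 : 0 <= g * (1 - x) by rewrite mulr_ge0 ?subr_ge0 // ltW.
have e3 : 0 <= g * x by rewrite mulr_ge0 // ltW.
have e4 : 0 <= gB * x by rewrite mulr_ge0 // ltW.
have e5 : 0 <= (1 - g) * x by rewrite mulr_ge0 // subr_ge0 ltW.
have e6 : 0 <= (1 - gB) * (1 - x) by rewrite mulr_ge0 // subr_ge0 // ltW.
split; [lra | split; [lra | split; lra]].
Qed.
Lemma ar3 (R : realFieldType) (g gB x : R) : 0 < g -> g < 1 -> 0 < gB -> gB < 1 -> 0 <= x -> x <= 1 ->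
  0 <= g * x /\ g * x <= 1 - gB + gB * x /\ 1 - gB + gB * x <= 1 - gB + gB * x /\ 1 - gB + gB * x <= 1.
Proof. intros; have [? [? [? ?]]] := @ar34 R g gB x H H0 H1 H2 H3 H4. by split=> //; split=> //; split=> //; exact: lexx. Qed.
Lemma ar4 (R : realFieldType) (g gB x : R) : 0 < g -> g < 1 -> 0 < gB -> gB < 1 -> 0 <= x -> x <= 1 ->
  0 <= g * x /\ g * x <= 0 + g * x /\ 0 + g * x <= 1 - gB + gB * x /\ 1 - gB + gB * x <= 1.
Proof. intros; have [? [? [? ?]]] := @ar34 R g gB x H H0 H1 H2 H3 H4. by split=> //; split=> //; rewrite add0r lexx. Qed.

Section aux.
Variables (R : realType) (S : finType) (B : {set S}) (g gB : R).
Hypotheses (hg0 : 0 < g) (hg1 : g < 1) (hgB0 : 0 < gB) (hgB1 : gB < 1).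
Variable sigma : nat -> S.

Let Sn t n := series (Gterm B g gB sigma t) n.

Lemma Srec t n : Sn t n.+1 = RB B gB (sigma t) + GammaB B g gB (sigma t) * Sn t.+1 n.
Proof.
rewrite /Sn /series /= big_nat_recl // big_distrr /=.
congr (_ + _).
  by rewrite /Gterm big_ord0 mulr1 addn0.
apply: eq_bigr => i _; rewrite /Gterm big_ord_recl addn0.
rewrite addSnnS mulrCA; congr (_ * (_ * _)).
by apply: eq_bigr => j _; rewrite /bump /=; congr (GammaB _ _ _ (sigma _)); rewrite addSnnS; congr (_ + _).
Qed.

Lemma RB_ge0 s : 0 <= RB B gB s.
Proof. by rewrite /RB; case: ifP => _; rewrite ?subr_ge0 ?(ltW hgB1). Qed.
Lemma Gam_ge0 s : 0 <= GammaB B g gB s.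
Proof. by rewrite /GammaB; case: ifP => _; apply: ltW. Qed.

Lemma Sn_bnd n : forall t, 0 <= Sn t n <= 1.
Proof.
elim: n => [|n IH] t; first by rewrite /Sn /series /= big_mkord big_ord0 lexx ler01.
rewrite Srec; have /andP[h0 h1] := IH t.+1.
apply/andP; split; first by rewrite addr_ge0 ?mulr_ge0 ?RB_ge0 ?Gam_ge0.
move: h0 h1; move: (Sn t.+1 n) => x h0 h1.
have e1 : 0 <= gB * (1 - x) by rewrite mulr_ge0 ?subr_ge0 // ltW.
have e2 : 0 <= g * (1 - x) by rewrite mulr_ge0 ?subr_ge0 // ltW.
rewrite /RB /GammaB; case: ifP => _; [exact: (@ar1 _ g gB x) | exact: (@ar2 _ g gB x)].
Qed.

Lemma Sn_cvg t : cvgn (Sn t).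
Proof.
apply: nondecreasing_is_cvgn.
  apply: nondecreasing_series => k _ _.
  by rewrite /Gterm mulr_ge0 ?RB_ge0 // prodr_ge0 // => j _; apply: Gam_ge0.
exists 1 => _ [n _ <-]; by have /andP[] := Sn_bnd n t.
Qed.

Lemma G_bnd t : 0 <= G B g gB sigma t <= 1.
Proof.
apply/andP; split.
  apply: limr_ge; first exact: Sn_cvg.
  by near=> n; have /andP[] := Sn_bnd n t.
apply: limr_le; first exact: Sn_cvg.
by near=> n; have /andP[] := Sn_bnd n t.
Unshelve. all: by end_near.
Qed.

Lemma G_rec t : G B g gB sigma t =
  RB B gB (sigma t) + GammaB B g gB (sigma t) * G B g gB sigma t.+1.
Proof.
apply: cvg_lim => //.
rewrite -cvg_shiftS.
have -> : [sequence Sn t n.+1]_n = (fun n => RB B gB (sigma t) + GammaB B g gB (sigma t) * Sn t.+1 n).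
  by apply: funext => n /=; rewrite Srec.
apply: cvgD; first exact: cvg_cst.
apply: cvgM; [exact: cvg_cst | exact: Sn_cvg].
Qed.
End aux.

Theorem lemma2 (R : realType) (S : finType) (B : {set S}) (g gB : R)
  (hg0 : 0 < g) (hg1 : g < 1) (hgB0 : 0 < gB) (hgB1 : gB < 1)
  (sigma : nat -> S) (t : nat) :
  0 <= g * G B g gB sigma t.+1 /\
  g * G B g gB sigma t.+1 <= G B g gB sigma t /\
  G B g gB sigma t <= 1 - gB + gB * G B g gB sigma t.+1 /\
  1 - gB + gB * G B g gB sigma t.+1 <= 1.
Proof.
Proof.
have /andP[h0 h1] := @G_bnd R S B g gB hg0 hg1 hgB0 hgB1 sigma t.+1.
rewrite (@G_rec R S B g gB hg0 hg1 hgB0 hgB1 sigma t).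
move: h0 h1; move: (G B g gB sigma t.+1) => x h0 h1.
rewrite /RB /GammaB; case: ifP => _; [exact: (@ar3 _ g gB x) | exact: (@ar4 _ g gB x)].
Qed.
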